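(* Let $V$ be a finite nonempty set and $f:\{0,1\}^V\to\{0,1\}^V$ a Boolean network. If no subnetwork of $f$ (including $f$ itself) is even-self-dual or odd-self-dual, then the conjugate $\tilde f$ of $f$ is a bijection.
   Context: For $x,y\in\{0,1\}^V$, $x\oplus y$ is componentwise addition mod 2, $1$ denotes the all-ones point, and $\|x\|$ is the number of components of $x$ equal to $1$; $x$ is even (odd) if $\|x\|$ is even (odd). The conjugate of $f$ is $\tilde f(x)=f(x)\oplus x$. For a nonempty $I\subseteq V$ and $z\in\{0,1\}^{V\setminus I}$, the subnetwork of $f$ induced by $z$ is the network $h:\{0,1\}^I\to\{0,1\}^I$ defined by $h(x|_I)=f(x)|_I$ for all $x\in\{0,1\}^V$ whose restriction to $V\setminus I$ equals $z$ (for $I=V$ this gives $f$ itself, so $f$ is a subnetwork of itself). A network $g$ on a set $W$ is self-dual if $g(x\oplus 1)=g(x)\oplus 1$ for all $x$; it is even if $\tilde g(\{0,1\}^W)$ is exactly the set of even points of $\{0,1\}^W$, and odd if $\tilde g(\{0,1\}^W)$ is exactly the set of odd points. It is even-self-dual (odd-self-dual) if it is both even (odd) and self-dual. *)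

(* Defs.v *)
From mathcomp Require Import all_boot.
Set Implicit Arguments. Unset Strict Implicit. Unset Printing Implicit Defensive.

Definition point (W : finType) := {ffun W -> bool}.
Definition network (W : finType) := point W -> point W.

Definition pxor (W : finType) (x y : point W) : point W :=
  [ffun w => xorb (x w) (y w)].
Definition ones (W : finType) : point W := [ffun _ => true].
Definition weight (W : finType) (x : point W) : nat := #|[set w | x w]|.
Definition even_point (W : finType) (x : point W) : bool := ~~ odd (weight x).
Definition odd_point (W : finType) (x : point W) : bool := odd (weight x).

Definition conjugate (W : finType) (f : network W) : network W :=
  fun x => pxor (f x) x.

Definition self_dual (W : finType) (g : network W) : Prop :=
  forall x, g (pxor x (ones W)) = pxor (g x) (ones W).

Definition even_net (W : finType) (g : network W) : Prop :=
  forall p : point W, (exists x, conjugate g x = p) <-> even_point p.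
Definition odd_net (W : finType) (g : network W) : Prop :=
  forall p : point W, (exists x, conjugate g x = p) <-> odd_point p.

Definition even_self_dual (W : finType) (g : network W) : Prop :=
  even_net g /\ self_dual g.
Definition odd_self_dual (W : finType) (g : network W) : Prop :=
  odd_net g /\ self_dual g.

(* The index set I is the finite subtype {v : V | v \in I};
   the fixed values z on V \ I are given as the restriction of a point y of
   {0,1}^V to V \ I (only those values of y are used). *)
Definition extend (V : finType) (I : {set V}) (y : point V)
  (u : point {v : V | v \in I}) : point V :=
  [ffun v => if insub v is Some w then u w else y v].

Definition subnetwork (V : finType) (f : network V) (I : {set V}) (y : point V)
  : network {v : V | v \in I} :=
  fun u => [ffun w : {v : V | v \in I} => f (extend y u) (val w)].
Arguments subnetwork {V} f I y _.
Arguments extend {V} I y u.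

(* Main.v *)
Require Import Defs.
From mathcomp Require Import all_boot.
From Stdlib Require Import Classical.
Set Implicit Arguments. Unset Strict Implicit. Unset Printing Implicit Defensive.

Section Cube.
Variable W : finType.

Definition flip (v : W) (t : point W) : point W :=
  [ffun w => if w == v then ~~ t w else t w].
Definition cpl (t : point W) : point W := pxor t (ones W).

Lemma flipK v : involutive (flip v).
Proof. by move=> t; apply/ffunP => w; rewrite !ffunE; case: eqP => // _; rewrite negbK. Qed.

Lemma cplK : involutive cpl.
Proof. by move=> t; apply/ffunP => w; rewrite !ffunE; case: (t w). Qed.

Lemma cpl_eq (a b : point W) : (forall w, a w != b w) -> b = cpl a.
Proof. move=> H; apply/ffunP => w; rewrite !ffunE; move: (H w); by case: (a w); case: (b w). Qed.

Lemma odd_flip v t : odd (weight (flip v t)) = ~~ odd (weight t).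
Proof.
rewrite /weight (cardsD1 v [set w | flip v t w]) (cardsD1 v [set w | t w]).
have -> : [set w | flip v t w] :\ v = [set w | t w] :\ v.
  by apply/setP => w; rewrite !inE !ffunE; case: eqP.
rewrite !inE !ffunE eqxx !oddD; case: (t v) => /=; by case: (odd _).
Qed.

Lemma cube_connect (Q : point W -> Prop) :
  (forall t v, Q t -> Q (flip v t)) -> forall r t, Q r -> Q t.
Proof.
move=> HQ r t Qr.
suff H : forall k (t : point W), #|[set w | t w != r w]| <= k -> Q t by exact: (H _ t (leqnn _)).
elim=> [|k IH] {}t Ht.
  have -> : t = r; last by [].
  apply/ffunP => w; apply/eqP; apply/negPn/negP => Hw.
  by move: Ht; rewrite leqn0 cards_eq0 => /eqP/setP/(_ w); rewrite !inE Hw.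
case: (pickP [pred w | t w != r w]) => [w /= Hw|none].
  rewrite -(flipK w t); apply: HQ; apply: IH.
  move: Ht; rewrite (cardsD1 w) inE Hw add1n ltnS; apply: leq_trans.
  apply: subset_leq_card; apply/subsetP => u; rewrite !inE !ffunE.
  case: (u =P w) => [->|Hu] //=; move: Hw; by case: (t w); case: (r w).
have -> : t = r; last by [].
by apply/ffunP => w; move: (none w) => /= /negbFE /eqP.
Qed.
End Cube.

Section Abstract.
Variable W : finType.
Variable F : point W -> point W.
Hypothesis H1 : forall a b : point W, a != b -> (exists w, a w = b w) ->
  exists w, (a w != b w) && (F a w != F b w).

Lemma near (a b : point W) : a != b -> b != cpl a -> exists w, (a w != b w) && (F a w != F b w).
Proof.
move=> ab bc; apply: H1 => //.
case: (boolP [exists w, a w == b w]) => [/existsP [w /eqP] | /existsPn H]; first by exists w.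
by move: bc; rewrite (cpl_eq (fun w => H w)) eqxx.
Qed.

Lemma fib (a b : point W) : F a = F b -> b = a \/ b = cpl a.
Proof.
move=> E; case: (eqVneq a b) => [->|ab]; first by left.
case: (eqVneq b (cpl a)) => [->|bc]; first by right.
by case: (near ab bc) => w; rewrite E eqxx andbF.
Qed.

Lemma a1 (x : point W) (v : W) (b : point W) : F x = F (cpl x) -> F b != flip v (F x).
Proof.
move=> C; apply/eqP => E.
have Fxv : F b v != F x v by rewrite E ffunE eqxx; case: (F x v).
have bx : x != b by apply: contraNneq Fxv => <-.
have bc : b != cpl x by apply: contraNneq Fxv => ->; rewrite -C.
have cx : cpl x != b by rewrite eq_sym.
have bcc : b != cpl (cpl x) by rewrite cplK eq_sym.
case: (near bx bc) => w /andP [xw Fw].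
case: (near cx bcc) => w' /andP [xw' Fw'].
have wv : w = v.
  apply/eqP; apply: contraNT Fw => nwv; by rewrite E ffunE (negbTE nwv).
have wv' : w' = v.
  apply/eqP; apply: contraNT Fw' => nwv; by rewrite -C E ffunE (negbTE nwv).
move: xw xw'; rewrite wv wv' !ffunE; by case: (x v); case: (b v).
Qed.

Definition slice (v : W) (c : bool) := [set b : point W | b v == c].
Definition setv (v : W) (c : bool) (t : point W) : point W :=
  [ffun w => if w == v then c else t w].

Lemma card_slice (v : W) (c : bool) : #|slice v c| = #|slice v false|.
Proof.
case: c => //.
rewrite -(card_preimset (slice v false) (can_inj (flipK v))).
apply: eq_card => b; rewrite !inE !ffunE eqxx; by case: (b v).
Qed.

Lemma surj (v : W) (c : bool) (q : point W) : exists b : point W, b v = c /\ forall w, w != v -> F b w = q w.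
Proof.
pose Phi (b : point W) := setv v false (F b).
have inj : {in slice v c &, injective Phi}.
  move=> b1 b2; rewrite !inE => /eqP h1 /eqP h2 E.
  apply/eqP; apply/negPn/negP => ne.
  case: (H1 ne); first by exists v; rewrite h1 h2.
  move=> w /andP [bw Fw].
  have wv : w != v by apply: contraNneq bw => ->; rewrite h1 h2.
  move: E => /ffunP /(_ w); rewrite /Phi !ffunE (negbTE wv) => E.
  by rewrite E eqxx in Fw.
have sub : Phi @: slice v c \subset slice v false.
  apply/subsetP => t /imsetP [b _ ->]; by rewrite inE ffunE eqxx.
have eq : Phi @: slice v c = slice v false.
  apply/eqP; rewrite eqEcard sub /= card_in_imset // card_slice //.
have : setv v false q \in Phi @: slice v c by rewrite eq inE ffunE eqxx.
case/imsetP => b; rewrite inE => /eqP bv E; exists b; split => // w wv.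
by move: E => /ffunP /(_ w); rewrite !ffunE (negbTE wv).
Qed.

Hypothesis H2 : exists a, F a = F (cpl a).

Lemma allC (x : point W) : F x = F (cpl x).
Proof.
pose Q r := exists x, F x = r /\ F x <> F (cpl x).
have HQ : forall t v, Q t -> Q (flip v t).
  move=> t v [y [<- nC]].
  case: (surj v (~~ y v) (F y)) => b [bv Fb].
  case: (eqVneq (F b v) (F y v)) => Fv.
    have E : F b = F y.
      apply/ffunP => w; case: (eqVneq w v) => [->|wv]; [exact: Fv | exact: Fb].
    case: (fib (esym E)) => h.
      by move: bv; rewrite h; case: (y v).
    by case: nC; rewrite -h E.
  have E : F b = flip v (F y).
    apply/ffunP => w; rewrite ffunE; case: (eqVneq w v) => [->|wv].
      by move: Fv; case: (F b v); case: (F y v).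
    exact: Fb.
  exists b; split => // Cb.
  by move: (@a1 b v y Cb); rewrite E flipK eqxx.
case: H2 => a Ca.
apply: NNPP => nC.
have : Q (F a) by apply: (cube_connect HQ (r := F x)); exists x.
case=> y [E nC']; apply: nC'; case: (fib (esym E)) => ->; first by [].
by rewrite cplK -Ca.
Qed.

Lemma image_parity (a : point W) (p : point W) :
  (exists x, F x = p) <-> odd (weight p) = odd (weight (F a)).
Proof.
pose M t := (exists x, F x = t) <-> odd (weight t) = odd (weight (F a)).
have HM : forall t v, M t -> M (flip v t).
  move=> t v Mt; rewrite /M odd_flip.
  case: (classic (exists x, F x = t)) => Et.
    have Ot := proj1 Mt Et.
    split; first by case=> y Ey; case: Et => x Ex; move: (@a1 x v y (allC x)); rewrite Ex -Ey eqxx.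
    by rewrite Ot; case: (odd _).
  have Ot : odd (weight t) <> odd (weight (F a)) by move=> h; apply: Et; apply: (proj2 Mt).
  split; last first.
    move=> _; case: (surj v false t) => b [_ Fb].
    case: (eqVneq (F b v) (t v)) => Fv.
      by case: Et; exists b; apply/ffunP => w; case: (eqVneq w v) => [->|wv]; [exact: Fv | exact: Fb].
    exists b; apply/ffunP => w; rewrite ffunE; case: (eqVneq w v) => [->|wv].
      by move: Fv; case: (F b v); case: (t v).
    exact: Fb.
  move=> _; move: Ot; by case: (odd (weight t)); case: (odd (weight (F a))).
apply: (cube_connect HM (r := F a)); split => //; by exists a.
Qed.

End Abstract.

Lemma sd_of (W : finType) (G : network W) :
  (forall a b : point W, a != b -> (exists w, a w = b w) ->
    exists w, (a w != b w) && (conjugate G a w != conjugate G b w)) ->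
  (exists a, conjugate G a = conjugate G (cpl a)) ->
  even_self_dual G \/ odd_self_dual G.
Proof.
move=> H1 H2.
have AC := @allC W (conjugate G) H1 H2.
have SD : self_dual G.
  move=> x; apply/ffunP => w; move: (AC x) => /ffunP /(_ w).
  rewrite /conjugate /cpl !ffunE.
  by case: (G (pxor x (ones W)) w); case: (G x w); case: (x w).
case: (H2) => a _.
case: (boolP (odd (weight (conjugate G a)))) => Ho; [right|left]; split => // p;
  rewrite (@image_parity W (conjugate G) H1 H2 a p) /even_point /odd_point;
  [rewrite Ho | rewrite (negbTE Ho)]; by case: (odd _).
Qed.

Lemma conj_sub (V : finType) (f : network V) (I : {set V}) (y : point V)
  (u : point {v : V | v \in I}) (w : {v : V | v \in I}) :
  conjugate (subnetwork f I y) u w = conjugate f (extend I y u) (val w).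
Proof. by rewrite /conjugate /subnetwork /extend !ffunE valK. Qed.

Theorem theorem8 (V : finType) (HV : 0 < #|V|) (f : network V) :
  (forall (I : {set V}) (y : point V), I != set0 ->
     ~ even_self_dual (subnetwork f I y) /\ ~ odd_self_dual (subnetwork f I y)) ->
  bijective (conjugate f).
Proof.
move=> H; apply: injF_bij => x1 x2 E; apply: NNPP => ne.
pose F := conjugate f.
pose dif (a b : point V) := [set w | a w != b w].
pose P n := [exists ab : point V * point V, [&& ab.1 != ab.2, #|dif ab.1 ab.2| == n &
   [forall w in dif ab.1 ab.2, F ab.1 w == F ab.2 w]]].
have exP : exists n, P n.
  exists #|dif x1 x2|; apply/existsP; exists (x1, x2) => /=.
  apply/and3P; split; [by apply/eqP | by [] |].
  by apply/forallP => w; apply/implyP => _; rewrite /F E.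
case: (ex_minnP exP) => n /existsP [[a b] /and3P [/= ab /eqP cn /forallP Hf]] minn.
have I0 : dif a b != set0.
  apply/set0Pn; apply: NNPP => h.
  suff e : a = b by rewrite e eqxx in ab.
  apply/ffunP => w; apply/eqP; apply/negPn/negP => hw; apply: h; exists w; by rewrite inE.
case: (H (dif a b) a I0) => nE nO.
have key : even_self_dual (subnetwork f (dif a b) a) \/ odd_self_dual (subnetwork f (dif a b) a).
  apply: sd_of.
    move=> u1 u2 neu [w0 e0].
    pose a1 := extend (dif a b) a u1. pose a2 := extend (dif a b) a u2.
    have a12 : a1 != a2.
      apply: contra neu => /eqP e; apply/eqP/ffunP => w.
      by move: e => /ffunP /(_ (val w)); rewrite /a1 /a2 /extend !ffunE valK.
    have sub : dif a1 a2 \subset dif a b :\ val w0.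
      apply/subsetP => w; rewrite !inE /a1 /a2 /extend !ffunE.
      case: insubP => [w' Hw <-|Hw]; last by rewrite eqxx.
      move=> h; apply/andP; split; last by move: (valP w'); rewrite inE.
      apply: contraNneq h => /val_inj ->; by rewrite e0.
    have lt : #|dif a1 a2| < n.
      rewrite -cn (cardsD1 (val w0) (dif a b)) (valP w0) add1n ltnS.
      exact: subset_leq_card.
    have nP : ~~ P #|dif a1 a2|.
      by apply/negP => /minn; rewrite leqNgt lt.
    move: nP => /existsPn /(_ (a1, a2)) /=; rewrite a12 eqxx /= => /forallPn [w].
    rewrite negb_imply => /andP [wd Fw].
    have wI : w \in dif a b by move: (subsetP sub w wd); rewrite inE => /andP [].
    exists (Sub w wI); rewrite !conj_sub /= Fw andbT.
    by move: wd; rewrite inE /a1 /a2 /extend !ffunE insubT.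
  exists [ffun w => a (val w)].
  apply/ffunP => w; rewrite !conj_sub.
  have -> : extend (dif a b) a [ffun w => a (val w)] = a.
    apply/ffunP => v; rewrite /extend !ffunE.
    case: (boolP (v \in dif a b)) => Hv; first by rewrite insubT !ffunE.
    by rewrite insubN.
  have -> : extend (dif a b) a (cpl [ffun w => a (val w)]) = b.
    apply/ffunP => v; rewrite /extend !ffunE.
    case: (boolP (v \in dif a b)) => Hv; last first.
      by rewrite insubN //; move: Hv; rewrite inE negbK => /eqP.
    rewrite insubT !ffunE /=; move: Hv; rewrite inE.
    case: (a v) => /=; by case: (b v).
  by apply/eqP; move: (Hf (val w)); rewrite (valP w).
by case: key.
Qed.
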